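(* For every integer $r\geq 9$, the Coxeter polynomial of the Nakayama algebra $N_{r+7}(r)$ is $$\chi_{(r+7,r)}(\lambda)=(\lambda+1)(\lambda^6-\lambda^3+1)(\lambda^r+1).$$ Consequently, the Coxeter number of $N_{r+7}(r)$ equals $\mathrm{lcm}(2r,9)$.
   Context: $N_n(r)$ is the path algebra over an algebraically closed field $k$ of the quiver $1\leftarrow2\leftarrow\cdots\leftarrow n$ modulo the ideal generated by all paths of length $r$. For a finite-dimensional algebra $\Lambda$ with indecomposable projectives $P(1),\dots,P(n)$, the Cartan matrix $C$ has entries $c_{ij}=\dim_k\mathrm{Hom}_\Lambda(P(i),P(j))$; the Coxeter matrix is $\phi_\Lambda=-C^{-t}C$; the Coxeter polynomial is $\det(\lambda E_n-\phi_\Lambda)$; the Coxeter number is the least $m\geq1$ with $\phi_\Lambda^m=E_n$ (identity matrix). *)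

(* Defs.v *)
From HB Require Import structures.
From mathcomp Require Import all_boot all_order all_algebra.
Set Implicit Arguments. Unset Strict Implicit. Unset Printing Implicit Defensive.
Import Order.TTheory GRing.Theory Num.Theory.
Local Open Scope ring_scope.

(* Cartan matrix of the Nakayama algebra N_n(r) = k[1 <- 2 <- ... <- n]/(paths of length r).
   Vertices are indexed 0..n-1 (vertex i+1 of the paper is index i).
   c_ij = dim Hom(P(i),P(j)) = number of nonzero paths between the vertices,
   which is 1 iff i <= j < i + r, and 0 otherwise. The entries are integers
   (independent of the field k). *)
Definition nakayama_cartan (n r : nat) : 'M[int]_n :=
  \matrix_(i < n, j < n) (if (i <= j)%N && (j < i + r)%N then 1 else 0).

Definition coxeter_mx (n : nat) (C : 'M[int]_n) : 'M[int]_n :=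
  - (invmx C^T *m C).

Definition coxeter_poly (n : nat) (C : 'M[int]_n) : {poly int} :=
  char_poly (coxeter_mx C).

Definition is_coxeter_number (n : nat) (C : 'M[int]_n) (m : nat) : Prop :=
  [/\ (0 < m)%N, (coxeter_mx C) ^+ m = 1%:M
    & forall k : nat, (0 < k)%N -> (k < m)%N -> (coxeter_mx C) ^+ k <> 1%:M].

(* Main.v *)
Require Import Defs.
From HB Require Import structures.
From mathcomp Require Import all_boot all_order all_algebra.
From mathcomp Require Import zify ring.
Set Implicit Arguments. Unset Strict Implicit. Unset Printing Implicit Defensive.
Import GRing.Theory.
Local Open Scope ring_scope.

Notation ind b := (if b then 1%R else 0%R : int).

Ltac splitfree j := repeat (match goal with |- context [if ?b then _ else _] => lazymatch b with context [j] => fail | _ => let E := fresh "E" in case E: b; cbv iota beta; try (exfalso; lia) end end).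

Ltac bash := match goal with
 | |- context [if ?b then _ else _] => let E := fresh "E" in case E: b; cbv iota beta; try (exfalso; lia); bash
 | _ => lia end.

Lemma sum_pin  (n : nat) (F : nat -> int) (a : nat) (c : bool) :
  \sum_(l < n) F l * ind (((l : nat) == a)%N && c) = if (a < n)%N && c then F a else 0.
Proof.
case: c; last by rewrite andbF big1 // => l _; rewrite andbF mulr0.
rewrite andbT; under eq_bigr do rewrite andbT.
case: (ltnP a n) => h.
  rewrite (bigD1 (Ordinal h)) //= eqxx mulr1 big1 ?addr0 // => l /eqP ne.
  rewrite ifF ?mulr0 //; apply/negbTE; apply/eqP => e; apply: ne; exact/val_inj.
rewrite big1 // => l _; rewrite ifF ?mulr0 //; apply/negbTE; apply/eqP => e.
by move: (ltn_ord l); rewrite e ltnNge h.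
Qed.

Lemma natr_b (b : bool) : ((b : nat)%:R : int) = ind b.
Proof. by case: b. Qed.

Lemma char_poly_cast n m (e : n = m) (M : 'M[int]_n) :
  char_poly (castmx (e, e) M) = char_poly M.
Proof. by case: m / e; rewrite castmx_id. Qed.

Lemma char_sim n (B M T : 'M[int]_n) :
  B *m M = T *m B -> \det B != 0 -> char_poly M = char_poly T.
Proof.
move=> h hB.
have h2 : map_mx polyC B *m char_poly_mx M = char_poly_mx T *m map_mx polyC B.
  by rewrite /char_poly_mx mulmxBr mulmxBl -!map_mxM h mul_mx_scalar mul_scalar_mx.
have hc : (\det B)%:P != 0 by rewrite polyC_eq0.
have := congr1 determinant h2; rewrite !det_mulmx det_map_mx mulrC.
exact: (mulIf hc).
Qed.

Definition sD : seq int := [:: 1; 1; 0; -1; -1; 0; 1; 1].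

Lemma poly_id r : ('X^r + 1) * Poly sD = ('X + 1) * ('X^6 - 'X^3 + 1) * ('X^r + 1) :> {poly int}.
Proof.
rewrite /sD /Poly /= !cons_poly_def mul0r add0r !polyCN !polyC1 polyC0 addr0.
ring.
Qed.

Lemma mulE m n p (f : nat -> nat -> int) (g : nat -> nat -> int) (i : 'I_m) (k : 'I_p) :
  ((\matrix_(i0 < m, j0 < n) f i0 j0) *m (\matrix_(j0 < n, k0 < p) g j0 k0)) i k
  = \sum_(j < n) f i j * g j k.
Proof. by rewrite !mxE; apply: eq_bigr => j _; rewrite !mxE. Qed.

Definition mxl (s : seq (seq int)) : 'M[int]_7 := \matrix_(i, j) nth 0 (nth [::] s i) j.

Definition Dc := mxl [:: [:: 0;0;0;0;1;0;1]; [:: 0;1;1;0;0;0;0]; [:: 0;0;0;-1;0;-1;0];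
  [:: -1;0;0;0;-1;0;0]; [:: 1;0;1;0;1;0;1]; [:: -1;0;0;0;-1;-1;-1]; [:: 1;0;0;0;0;0;1]].
Definition Kc := mxl [:: [:: -1;0;0;-1;0;0;1]; [:: 1;2;0;-1;-2;0;1]; [:: -1;0;0;1;2;0;-1];
  [:: 1;0;-2;-1;0;2;1]; [:: 1;0;0;-1;0;0;-1]; [:: -1;0;0;1;0;-2;-1]; [:: 1;0;0;1;0;0;1]].

Lemma KcDc : Kc *m Dc = 2%:M.
Proof.
apply/matrixP => i j; rewrite !mxE !big_ord_recr big_ord0 /= !mxE /=.
by case: i => [[|[|[|[|[|[|[|i]]]]]]] hi] //; case: j => [[|[|[|[|[|[|[|j]]]]]]] hj].
Qed.

Lemma detDc : \det Dc != 0.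
Proof.
apply/negP => /eqP h; have := congr1 determinant KcDc.
by rewrite det_mulmx h mulr0 det_scalar.
Qed.

Lemma sum_pinR (n : nat) (F : nat -> int) (a : nat) (c : bool) :
  \sum_(l < n) F l * ind (c && ((l : nat) == a)%N) = if c && (a < n)%N then F a else 0.
Proof.
rewrite andbC -sum_pin; apply: eq_bigr => l _; by rewrite andbC.
Qed.

Section S.
Variable r : nat.
Hypothesis hr : (9 <= r)%N.

Definition phif (l j : nat) : int :=
  ind ((l == j.+1)%N && (j.+1 < r)%N) + ind ((l == j + r.+1)%N && true)
  - ind ((l == 0)%N && (j < r)%N) - ind ((l == r)%N && (j < r.-1)%N)
  - ind ((l == j.+1 - r)%N && (r <= j)%N).

Definition phi0 : 'M[int]_(r+7) := \matrix_(l, j) phif l j.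

Lemma sumPhi  (F : nat -> int) (j : nat) :
  \sum_(l < r+7) F l * phif l j =
    (if (j.+1 < r+7)%N && (j.+1 < r)%N then F j.+1 else 0)
  + (if (j + r.+1 < r+7)%N && true then F (j + r.+1)%N else 0)
  - (if (0 < r+7)%N && (j < r)%N then F 0%N else 0)
  - (if (r < r+7)%N && (j < r.-1)%N then F r else 0)
  - (if (j.+1 - r < r+7)%N && (r <= j)%N then F (j.+1 - r)%N else 0).
Proof.
rewrite /phif.
under eq_bigr do rewrite !mulrBr mulrDr.
by rewrite !sumrB big_split /= !sum_pin.
Qed.

Lemma CtPhi  : (nakayama_cartan (r+7) r)^T *m phi0 = - nakayama_cartan (r+7) r.
Proof.
apply/matrixP => i j; rewrite !mxE.
under eq_bigr do rewrite !mxE.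
rewrite (sumPhi (fun l => ind ((l <= i)%N && (i < l + r)%N))).
have := ltn_ord i; have := ltn_ord j.
move: (nat_of_ord i) (nat_of_ord j) => a b ha hb.
bash.
Qed.


Lemma coxE  : coxeter_mx (nakayama_cartan (r+7) r) = phi0.
Proof.
set C := nakayama_cartan (r+7) r.
have U : C^T \in unitmx.
  rewrite unitmxE det_trig; last first.
    apply/is_trig_mxP => i j lt; rewrite !mxE ifF //; apply/negbTE; lia.
  rewrite big1 ?unitr1 // => i _; rewrite !mxE leqnn /= ifT //; lia.
rewrite /coxeter_mx; suff -> : invmx C^T *m C = - phi0 by rewrite opprK.
by rewrite -[X in _ *m X]opprK -CtPhi mulmxN mulKmx.
Qed.

Definition rv (f : nat -> int) : 'rV[int]_(r+7) := \row_(j < r+7) f j.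

Lemma rv_ext f g : (forall j, (j < r+7)%N -> f j = g j) -> rv f = rv g.
Proof. by move=> h; apply/rowP => j; rewrite !mxE h. Qed.

Definition phiF (f : nat -> int) (j : nat) : int :=
    (if (j.+1 < r+7)%N && (j.+1 < r)%N then f j.+1 else 0)
  + (if (j + r.+1 < r+7)%N && true then f (j + r.+1)%N else 0)
  - (if (0 < r+7)%N && (j < r)%N then f 0%N else 0)
  - (if (r < r+7)%N && (j < r.-1)%N then f r else 0)
  - (if (j.+1 - r < r+7)%N && (r <= j)%N then f (j.+1 - r)%N else 0).

Lemma rvPhi  f : rv f *m phi0 = rv (phiF f).
Proof.
apply/rowP => j; rewrite !mxE; under eq_bigr do rewrite !mxE.
exact: sumPhi.
Qed.

Definition uf (k j : nat) : int :=
  if (k == 0)%N then ind (j == r)%N - ind (j == 0)%N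
  else if (k <= r - 7)%N then ind (j == r - k)%N
  else if (k == r - 6)%N then ind (j == 6)%N - ind (j == r + 6)%N
  else if (k == r - 5)%N then - ind (j == r + 5)%N
  else if (k == r - 4)%N then - ind (j == 4)%N
  else if (k == r - 3)%N then ind (j == r + 3)%N - ind (j == 3)%N
  else if (k == r - 2)%N then ind (j == r + 2)%N
  else ind (j == 1)%N.

Lemma stepU  k : (k.+1 < r)%N -> rv (uf k) *m phi0 = rv (uf k.+1).
Proof.
move=> hk; rewrite rvPhi; apply: rv_ext => j hj; rewrite /phiF /uf.
splitfree j; bash.
Qed.

Lemma stepU_last  : rv (uf r.-1) *m phi0 = - rv (uf 0).
Proof.
have -> : - rv (uf 0) = rv (fun j => - uf 0 j) by apply/rowP => j; rewrite !mxE.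
rewrite rvPhi; apply: rv_ext => j hj; rewrite /phiF /uf.
splitfree j; bash.
Qed.


Definition wf (k j : nat) : int :=
  if (k == 0)%N then ind (j == 3)%N + ind (j == 4)%N + ind (j == r + 5)%N + ind (j == r + 6)%N
  else if (k == 1)%N then ind ((2 <= j) && (j <= 5))%N - ind (j == r + 2)%N - ind (j == r + 3)%N
  else if (k == 2)%N then ind (j == 3)%N + ind (j == 4)%N - ind ((r + 1 <= j) && (j <= r + 4))%N
  else if (k == 3)%N then - ind (j <= 1)%N - ind (j == r + 2)%N - ind (j == r + 3)%N
  else if (k == 4)%N then ind ((3 <= j) && (j <= r))%N
  else if (k == 5)%N then - ind (j <= 1)%N - ind ((r + 2 <= j) && (j <= r + 6))%N
  else if (k == 6)%N then ind ((6 <= j) && (j <= r))%N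
  else if (k == 7)%N then - ind (j <= 4)%N - ind (r + 5 <= j)%N
  else ind ((6 <= j) && (j <= r + 3))%N.

Lemma stepW k : (k < 8)%N -> rv (wf k) *m phi0 = rv (wf k.+1).
Proof.
move=> hk; rewrite rvPhi; apply: rv_ext => j hj; rewrite /phiF.
do 8 (case: k hk => [|k] hk; [rewrite /wf /=; bash|]). by [].
Qed.

Lemma stepW_last  : rv (wf 8) *m phi0 = - rv (wf 0).
Proof.
have -> : - rv (wf 0) = rv (fun j => - wf 0 j) by apply/rowP => j; rewrite !mxE.
rewrite rvPhi; apply: rv_ext => j hj; rewrite /phiF /wf.
bash.
Qed.

Lemma relW7 j : (j < r + 7)%N -> wf 7 j = - wf 0 j - wf 1 j + wf 3 j + wf 4 j - wf 6 j.
Proof. move=> hj; rewrite /wf /=; bash. Qed.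


Lemma rowBU_gen m (G : nat -> nat -> int) (k : 'I_m) :
  row k (\matrix_(k0 < m, j < r + 7) G k0 j) = rv (G k).
Proof. by apply/rowP => j; rewrite !mxE. Qed.

Definition A : 'M[int]_r := \matrix_(k, l)
  (- ind (((l : nat) == 0) && (k == r.-1 :> nat))%N + ind (((l : nat) == k.+1) && (k != r.-1 :> nat))%N).

Definition D : 'M[int]_7 := \matrix_(k, l)
  (if (k == 6 :> nat) then - nth 0 sD l else ind ((l : nat) == k.+1)%N).

Definition BU : 'M[int]_(r, r + 7) := \matrix_(k, j) uf k j.
Definition BW : 'M[int]_(7, r + 7) := \matrix_(k, j) wf k j.
Definition B2 : 'M[int]_(r + 7) := col_mx BU BW.
Definition T : 'M[int]_(r + 7) := block_mx A 0 0 D.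

Lemma sum_pinL (n : nat) (F : nat -> int) (a : nat) (c : bool) :
  \sum_(l < n) ind (((l : nat) == a)%N && c) * F l = if (a < n)%N && c then F a else 0.
Proof. rewrite -sum_pin; apply: eq_bigr => l _; exact: mulrC. Qed.

Lemma BU_phi : BU *m phi0 = A *m BU.
Proof.
apply/row_matrixP => k; rewrite !row_mul rowBU_gen.
have -> : row k A *m BU = rv (fun j => - (if (0 < r)%N && (k == r.-1 :> nat) then uf 0 j else 0)
   + (if (k.+1 < r)%N && (k != r.-1 :> nat) then uf k.+1 j else 0)).
  apply/rowP => j; rewrite !mxE.
  under eq_bigr do rewrite !mxE mulrDl mulNr.
  by rewrite big_split /= sumrN !(sum_pinL _ (fun l => uf l j)).
have hk := ltn_ord k.
case: (ltnP k.+1 r) => h.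
  by rewrite stepU //; apply: rv_ext => j _ /=; bash.
have e : (k : nat) = r.-1 by lia.
by rewrite e stepU_last; apply/rowP => j; rewrite !mxE; bash.
Qed.

Lemma BW_phi : BW *m phi0 = D *m BW.
Proof.
apply/row_matrixP => k; rewrite !row_mul rowBU_gen.
case: k => [[|[|[|[|[|[|[|m]]]]]]] hk] //=;
  rewrite ?stepW //; apply/rowP => j; rewrite !mxE !big_ord_recr big_ord0 /= !mxE /=;
  rewrite ?(mul0r, mul1r, mulN1r, add0r, addr0) //.
rewrite relW7 //; lia.
Qed.

Lemma B2_phi : B2 *m phi0 = T *m B2.
Proof.
by rewrite /B2 /T mul_col_mx mul_block_col !mul0mx addr0 add0r BU_phi BW_phi.
Qed.


Lemma charA : char_poly A = 'X^r + 1.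
Proof.
have sz : size ('X^r + 1 : {poly int}) = r.+1 by rewrite -polyC1 size_XnaddC //; lia.
have eA : (size ('X^r + 1 : {poly int})).-1 = r by rewrite sz.
have -> : A = castmx (eA, eA) (companionmx ('X^r + 1)).
  apply/matrixP => i j; rewrite castmxE !mxE /= coefD coefXn coef1 sz /=.
  have := ltn_ord i; have := ltn_ord j.
  move: (nat_of_ord i) (nat_of_ord j) => a b ha hb.
  rewrite !natr_b; bash.
by rewrite char_poly_cast companionmxK // -polyC1 monicXnaddC //; lia.
Qed.

Lemma charD : char_poly D = Poly sD.
Proof.
have hP : (Poly sD : seq int) = sD by apply: (@PolyK _ 0).
have eD : (size (Poly sD)).-1 = 7 by rewrite hP.
have -> : D = castmx (eD, eD) (companionmx (Poly sD)).
  have e6 : (size (Poly sD)).-2 = 6 by rewrite hP.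
  have cv : forall n m (e : n = m) (x : 'I_n), (cast_ord e x : nat) = x by [].
  apply/matrixP => i j; rewrite castmxE !mxE coef_Poly !cv natr_b.
  have -> : (nat_of_ord i == (size (Poly sD)).-2) = (nat_of_ord i == 6) by rewrite e6.
  by case: ifP => // _; rewrite eq_sym.
rewrite char_poly_cast companionmxK //.
by rewrite monicE lead_coefE hP; apply/eqP.
Qed.

Lemma charT : char_poly T = ('X + 1) * ('X^6 - 'X^3 + 1) * ('X^r + 1).
Proof.
by rewrite /char_poly /T char_block_diag_mx det_ublock -/(char_poly A) -/(char_poly D) charA charD poly_id.
Qed.


Definition epos (l : nat) : nat := nth 0%N [:: 0; 2; 5; r + 1; r + 3; r + 4; r + 6]%N l.
Definition E : 'M[int]_(7, r + 7) := \matrix_(l, j) ind ((j : nat) == epos l)%N.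
Definition B1 : 'M[int]_(r + 7) := col_mx BU E.
Definition pf (j l : nat) : int :=
  ind ((l == r - j) && ((7 <= j) && (j < r)))%N + ind ((l == r - 1) && (j == 1))%N
  - ind ((l == r - 3) && (j == 3))%N - ind ((l == r - 4) && (j == 4))%N
  + ind ((l == r - 6) && (j == 6))%N + ind ((l == r - 2) && (j == r + 2))%N
  - ind ((l == r - 5) && (j == r + 5))%N + ind ((l == 0) && (j == r))%N.
Definition qf (j l : nat) : int :=
  ind ((l == 0) && (j == 0))%N + ind ((l == 0) && (j == r))%N + ind ((l == 1) && (j == 2))%N
  + ind ((l == 2) && (j == 5))%N + ind ((l == 3) && (j == r + 1))%N + ind ((l == 4) && (j == 3))%N
  + ind ((l == 4) && (j == r + 3))%N + ind ((l == 5) && (j == r + 4))%N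
  + ind ((l == 6) && (j == 6))%N + ind ((l == 6) && (j == r + 6))%N.
Definition Pm : 'M[int]_(r + 7, r) := \matrix_(j, l) pf j l.
Definition Qm : 'M[int]_(r + 7, 7) := \matrix_(j, l) qf j l.
Definition B1i : 'M[int]_(r + 7) := row_mx Pm Qm.

Lemma uf_r1 b : uf (r - 1) b = ind (b == 1)%N. Proof. rewrite /uf; bash. Qed.
Lemma uf_r2 b : uf (r - 2) b = ind (b == r + 2)%N. Proof. rewrite /uf; bash. Qed.
Lemma uf_r3 b : uf (r - 3) b = ind (b == r + 3)%N - ind (b == 3)%N. Proof. rewrite /uf; bash. Qed.
Lemma uf_r4 b : uf (r - 4) b = - ind (b == 4)%N. Proof. rewrite /uf; bash. Qed.
Lemma uf_r5 b : uf (r - 5) b = - ind (b == r + 5)%N. Proof. rewrite /uf; bash. Qed.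
Lemma uf_r6 b : uf (r - 6) b = ind (b == 6)%N - ind (b == r + 6)%N. Proof. rewrite /uf; bash. Qed.
Lemma uf_0 b : uf 0 b = ind (b == r)%N - ind (b == 0)%N. Proof. by []. Qed.
Lemma ufm a b : (if [&& (r - a < r)%N, (6 < a)%N & (a < r)%N] then uf (r - a) b else 0)
  = ind [&& (6 < a)%N, (a < r)%N & (b == a)%N].
Proof. rewrite /uf; bash. Qed.

Lemma B1iB1 : B1i *m B1 = 1%:M.
Proof.
rewrite /B1i /B1 mul_row_col; apply/matrixP => i j; rewrite [LHS]mxE /Pm /Qm /BU /E (@mulE _ _ _ _ uf) (@mulE _ _ _ _ (fun l j => ind (j == epos l)%N)).
rewrite /pf /qf.
under eq_bigr do rewrite !(mulrDl, mulrBl, mulNr).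
under [X in _ + X]eq_bigr do rewrite !(mulrDl, mulrBl, mulNr).
rewrite !(big_split, sumrB, sumrN) /= !(sum_pinL _ (fun l => uf l j)).
rewrite !(sum_pinL _ (fun l => ind ((j : nat) == epos l)%N)) /epos /= !mxE natr_b -val_eqE /=.
have := ltn_ord i; have := ltn_ord j.
move: (nat_of_ord i) (nat_of_ord j) => a b ha hb.
rewrite ufm uf_r1 uf_r2 uf_r3 uf_r4 uf_r5 uf_r6 uf_0; splitfree b; bash.
Qed.


Lemma BWQ : BW *m Qm = Dc.
Proof.
apply/matrixP => k l; rewrite /BW /Qm (@mulE _ _ _ wf qf) /qf.
under eq_bigr do rewrite !mulrDr.
rewrite !big_split /= !(sum_pinR _ (wf k)) /Dc /mxl mxE.
case: k => [[|[|[|[|[|[|[|k]]]]]]] hk] //; case: l => [[|[|[|[|[|[|[|l]]]]]]] hl] //;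
  rewrite /wf /=; bash.
Qed.

Lemma detB2 : \det B2 != 0.
Proof.
have h1 := B1iB1; have h2 := mulmx1C h1.
have hB1 : \det B1 != 0.
  apply/negP => /eqP h; have := congr1 determinant h1.
  by rewrite det_mulmx h mulr0 det1.
move: h2; rewrite /B1 /B1i mul_col_row (scalar_mx_block r 7) => /eq_block_mx [hP hQ _ _].
have eB : B2 = (B2 *m B1i) *m B1 by rewrite -mulmxA h1 mulmx1.
rewrite eB det_mulmx mulf_neq0 //.
rewrite /B2 /B1i mul_col_row hP hQ det_lblock det1 mul1r BWQ.
exact: detDc.
Qed.


Lemma charPhi : char_poly phi0 = ('X + 1) * ('X^6 - 'X^3 + 1) * ('X^r + 1).
Proof. by rewrite (char_sim B2_phi detB2) charT. Qed.


Lemma mulmx_pow (v : 'rV[int]_(r + 7)) a b :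
  v *m phi0 ^+ (a + b) = v *m phi0 ^+ a *m phi0 ^+ b.
Proof. by rewrite exprD -mulmxA. Qed.

Lemma orbU k : (k < r)%N -> rv (uf 0) *m phi0 ^+ k = rv (uf k).
Proof.
elim: k => [|k IH] hk; first by rewrite expr0 mulmx1.
have := mulmx_pow (rv (uf 0)) k 1; rewrite addn1 expr1 => ->.
by rewrite IH ?stepU //; lia.
Qed.

Lemma orbU_r : rv (uf 0) *m phi0 ^+ r = - rv (uf 0).
Proof.
have := mulmx_pow (rv (uf 0)) r.-1 1; rewrite addn1 expr1 prednK; last by lia.
by move=> ->; rewrite orbU ?stepU_last //; lia.
Qed.

Lemma vPow q s : (s < r)%N ->
  rv (uf 0) *m phi0 ^+ (q * r + s) = (-1) ^+ q *: rv (uf s).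
Proof.
move=> hs; elim: q => [|q IH]; first by rewrite mul0n add0n scale1r orbU.
by rewrite mulSn -addnA mulmx_pow orbU_r mulNmx IH exprS mulN1r scaleNr.
Qed.

Lemma orbW k : (k <= 8)%N -> rv (wf 0) *m phi0 ^+ k = rv (wf k).
Proof.
elim: k => [|k IH] hk; first by rewrite expr0 mulmx1.
have := mulmx_pow (rv (wf 0)) k 1; rewrite addn1 expr1 => ->.
by rewrite IH ?stepW //; lia.
Qed.

Lemma orbW_9 : rv (wf 0) *m phi0 ^+ 9 = - rv (wf 0).
Proof.
have := mulmx_pow (rv (wf 0)) 8 1; rewrite expr1 => ->.
by rewrite orbW ?stepW_last.
Qed.

Lemma wPow q s : (s < 9)%N ->
  rv (wf 0) *m phi0 ^+ (q * 9 + s) = (-1) ^+ q *: rv (wf s).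
Proof.
move=> hs; elim: q => [|q IH]; first by rewrite mul0n add0n scale1r orbW //; lia.
by rewrite mulSn -addnA mulmx_pow orbW_9 mulNmx IH exprS mulN1r scaleNr.
Qed.

Lemma B2pow m : (2 * r %| m)%N -> (9 %| m)%N -> B2 *m phi0 ^+ m = B2.
Proof.
move=> h1 h2.
have hU : rv (uf 0) *m phi0 ^+ m = rv (uf 0).
  have -> : m = ((m %/ (2 * r) * 2) * r + 0)%N by rewrite addn0 -mulnA divnK.
  by rewrite vPow ?(ltn_trans _ hr) // -signr_odd oddM andbF expr0 scale1r.
have h18 : (18 %| m)%N.
  by rewrite -[18%N]/(lcmn 2 9) dvdn_lcm h2 (dvdn_trans _ h1) // dvdn_mulr.
have hW : rv (wf 0) *m phi0 ^+ m = rv (wf 0).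
  have -> : m = ((m %/ 18 * 2) * 9 + 0)%N by rewrite addn0 -mulnA divnK.
  by rewrite wPow // -signr_odd oddM andbF expr0 scale1r.
have c k : GRing.comm (phi0 ^+ k) (phi0 ^+ m).
  by apply: commrX; apply/commr_sym; apply: commrX; exact: commr_refl.
rewrite /B2 mul_col_mx; congr col_mx; apply/row_matrixP => k; rewrite row_mul rowBU_gen.
  by rewrite -(orbU (ltn_ord k)) -mulmxA mulmxE c -mulmxE mulmxA hU.
have hk : (k <= 8)%N by have := ltn_ord k; lia.
by rewrite -(orbW hk) -mulmxA mulmxE c -mulmxE mulmxA hW.
Qed.

Lemma phi_pow_m : phi0 ^+ (lcmn (2 * r) 9) = 1%:M.
Proof.
have h := B2pow (dvdn_lcml (2 * r) 9) (dvdn_lcmr (2 * r) 9).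
have := congr1 (mulmx (\adj B2)) h; rewrite mulmxA mul_adj_mx mul_scalar_mx.
rewrite -scalemx1 => e; apply/matrixP => i j.
have := congr1 (fun M : 'M[int]_(r + 7) => M i j) e; rewrite !mxE /= => h3.
by apply: (mulfI detB2); rewrite h3 mul1r mulr_natr.
Qed.

Lemma uf_at0 s : (0 < s < r)%N -> uf s 0 = 0.
Proof. move=> hs; rewrite /uf; bash. Qed.

Definition o0 : 'I_(r + 7) := Ordinal (ltn_addl r (isT : (0 < 7)%N)).
Definition oi (j : nat) : 'I_(r + 7) := insubd o0 j.
Lemma val_oi j : (j < r + 7)%N -> (oi j : nat) = j.
Proof. by move=> h; rewrite /oi val_insubd h. Qed.

Lemma phi_pow_min k : (0 < k)%N -> phi0 ^+ k = 1%:M -> (lcmn (2 * r) 9 <= k)%N.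
Proof.
move=> k0 hk; apply: dvdn_leq => //; rewrite dvdn_lcm; apply/andP; split.
  have e := divn_eq k r.
  have hs : (k %% r < r)%N by rewrite ltn_mod; lia.
  have h := vPow (k %/ r) hs; rewrite -e hk mulmx1 in h.
  have h0 := congr1 (fun v : 'rV[int]_(r + 7) => v 0 o0) h; rewrite /= !mxE in h0.
  move: h0 e hs; move: (k %/ r)%N (k %% r)%N => q s h0 e hs.
  have s0 : s = 0%N.
    case: (posnP s) => // sp.
    have hz : uf s 0 = 0 by apply: uf_at0; lia.
    by move: h0; rewrite hz mulr0 /uf /=; bash.
  rewrite s0 in h0 e; rewrite -signr_odd in h0.
  have hq : ~~ odd q by move: h0; case: (odd q) => //=; rewrite expr1 /uf /=; bash.
  by rewrite e addn0; apply: dvdn_mul; [rewrite dvdn2 | exact: dvdnn].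
have e := divn_eq k 9.
have hs : (k %% 9 < 9)%N by rewrite ltn_mod.
have h := wPow (k %/ 9) hs; rewrite -e hk mulmx1 in h.
move: h e hs; move: (k %/ 9)%N (k %% 9)%N => q s h e hs.
rewrite -signr_odd in h.
have hj j : (j < r + 7)%N -> wf 0 j = (-1) ^+ odd q * wf s j.
  by move=> hj; have := congr1 (fun v : 'rV[int]_(r + 7) => v 0 (oi j)) h; rewrite /= !mxE val_oi.
have r5 : (r + 5 < r + 7)%N by lia.
have r3 : (3 < r + 7)%N by lia.
have r0 : (0 < r + 7)%N by lia.
case: s hs e {h} hj => [|[|[|[|[|[|[|[|[|s]]]]]]]]] hs e hj; first by rewrite e addn0 dvdn_mull.
- by move: (hj _ r5); case: (odd q); rewrite /= ?expr1 ?expr0 /wf /=; bash.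
- by move: (hj _ r5); case: (odd q); rewrite /= ?expr1 ?expr0 /wf /=; bash.
- by move: (hj _ r5); case: (odd q); rewrite /= ?expr1 ?expr0 /wf /=; bash.
- by move: (hj _ r5); case: (odd q); rewrite /= ?expr1 ?expr0 /wf /=; bash.
- by move: (hj _ r3); case: (odd q); rewrite /= ?expr1 ?expr0 /wf /=; bash.
- by move: (hj _ r3); case: (odd q); rewrite /= ?expr1 ?expr0 /wf /=; bash.
- by move: (hj _ r0); case: (odd q); rewrite /= ?expr1 ?expr0 /wf /=; bash.
- by move: (hj _ r3); case: (odd q); rewrite /= ?expr1 ?expr0 /wf /=; bash.
- by [].
Qed.


End S.

Theorem proposition6p1 (r : nat) (hr : (9 <= r)%N) :
  coxeter_poly (nakayama_cartan (r + 7) r)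
    = ('X + 1) * ('X^6 - 'X^3 + 1) * ('X^r + 1)
  /\ is_coxeter_number (nakayama_cartan (r + 7) r) (lcmn (2 * r) 9).
Proof.
split; first by rewrite /coxeter_poly coxE ?charPhi.
split.
- by rewrite lcmn_gt0; apply/andP; split => //; lia.
- by rewrite coxE ?phi_pow_m.
- move=> k k0 km; rewrite coxE // => /(phi_pow_min hr k0); lia.
Qed.
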